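(* Let $\mathcal{H}$ be a Hilbert space, $h\in\mathcal{H}$, $\mathcal{L}$ a nonempty set of closed subspaces of $\mathcal{H}$, and define $\mathcal{C}: 2^{\mathcal{L}}\to 2^{\mathcal{L}}$ by $b\in\mathcal{C}(A)$ iff $A^*_p(h)\in b$. If $A,B\subseteq\mathcal{L}$ and $B\subseteq\mathcal{C}(A)$, then $A^*_p(h)=(A^*\cap B^* )_p(h)$ and $d(h,A^* )\ge d(h,B^* )$.
   Context: For $A\subseteq\mathcal{L}$, $A^*=\bigcap_{a\in A}a$ (with $A^*=\mathcal{H}$ if $A=\emptyset$); for a closed subspace $V$, $V_p$ denotes the orthogonal projection onto $V$ (so $V_p(h)$ is the point of $V$ closest to $h$), and $A^*_p=(A^* )_p$. $d(h,V)$ denotes the distance from $h$ to the closed subspace $V$. *)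

(* Defs.v *)
From HB Require Import structures.
From mathcomp Require Import all_boot all_order all_algebra.
From mathcomp Require Import all_classical all_reals all_analysis.
Set Implicit Arguments. Unset Strict Implicit. Unset Printing Implicit Defensive.
Import Order.TTheory GRing.Theory Num.Theory.
Import numFieldNormedType.Exports.
Local Open Scope classical_set_scope.
Local Open Scope ring_scope.

(* ip is a (real) inner product on H inducing the norm of H.  Together with
   completeness of H this makes H a real Hilbert space. *)
Definition inner_product_for {R : realType} {H : normedModType R}
  (ip : H -> H -> R) : Prop :=
  [/\ forall x y, ip x y = ip y x,
      forall a x y z, ip (a *: x + y) z = a * ip x z + ip y z
    & forall x, ip x x = `|x| ^+ 2].

Definition closed_subspace {R : realType} {H : normedModType R} (V : set H) : Prop :=
  [/\ V 0, (forall x y, V x -> V y -> V (x + y)),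
      (forall (a : R) x, V x -> V (a *: x)) & closed V].

Definition Astar {R : realType} {H : normedModType R} (A : set (set H)) : set H :=
  \bigcap_(a in A) a.

Definition is_closest {R : realType} {H : normedModType R} (V : set H) (h p : H) : Prop :=
  V p /\ forall v, V v -> `|h - p| <= `|h - v|.

Definition orth_proj {R : realType} {H : normedModType R} (V : set H) (h : H) : H :=
  xget 0 (is_closest V h).

Definition dist {R : realType} {H : normedModType R} (h : H) (V : set H) : R :=
  inf [set `|h - v| | v in V].

(* Main.v *)
Require Import Defs.
From HB Require Import structures.
From mathcomp Require Import all_boot all_order all_algebra.
From mathcomp Require Import all_classical all_reals all_analysis.
From mathcomp Require Import ring lra.
Import Order.TTheory GRing.Theory Num.Theory.
Import numFieldNormedType.Exports.
Local Open Scope classical_set_scope.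
Local Open Scope ring_scope.

Section S.
Variables (R : realType) (H : normedModType R) (ip : H -> H -> R).
Hypothesis hip : inner_product_for ip.

Lemma parallelogram (x y : H) :
  `|x + y| ^+ 2 + `|x - y| ^+ 2 = 2 * `|x| ^+ 2 + 2 * `|y| ^+ 2.
Proof.
case: hip => sym lin nrm.
have ipD z u v : ip (u + v) z = ip u z + ip v z.
  by have := lin 1 u v z; rewrite scale1r mul1r.
have ip0 z : ip 0 z = 0.
  have := ipD z 0 0; rewrite addr0 => e; lra.
have ipN z u : ip (- u) z = - ip u z.
  by have := lin (-1) u 0 z; rewrite addr0 ip0 addr0 scaleN1r mulN1r.
have ipD2 z u v : ip z (u + v) = ip z u + ip z v by rewrite sym ipD !(sym z).
have ipN2 z u : ip z (- u) = - ip z u by rewrite sym ipN sym.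
rewrite -!nrm !ipD !ipD2 !ipN !ipN2 (sym y x).
lra.
Qed.

Lemma midpoint (x y h : H) :
  `|x - y| ^+ 2 = 2 * `|h - x| ^+ 2 + 2 * `|h - y| ^+ 2
                  - 4 * `|h - 2^-1 *: (x + y)| ^+ 2.
Proof.
have := parallelogram (h - x) (h - y).
have -> : h - x - (h - y) = y - x by rewrite opprB addrC addrA addrNK.
have -> : h - x + (h - y) = 2 *: (h - 2^-1 *: (x + y)).
  rewrite scalerBr scalerA mulfV ?pnatr_eq0 // scale1r scaler_nat mulr2n.
  by rewrite opprD addrACA.
rewrite normrZ ger0_norm // exprMn (distrC y x) => e.
have -> : (4 : R) = 2 ^+ 2 by rewrite expr2; lra.
lra.
Qed.
End S.

Section E.
Variables (R : realType) (H : completeNormedModType R) (ip : H -> H -> R).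
Hypothesis hip : inner_product_for ip.

Lemma proj_exists (V : set H) h : closed_subspace V -> exists p, is_closest V h p.
Proof.
case=> V0 VD VZ Vcl.
set D := [set `|h - v| | v in V].
have hlb : has_lbound D by exists 0 => _ [v _ <-].
have hne : D !=set0 by exists `|h - 0|; exists 0.
set d := inf D.
have dle v : V v -> d <= `|h - v| by move=> Vv; apply: ge_inf => //; exists v.
have d0 : 0 <= d by apply: lb_le_inf => // _ [v _ <-].
have ex n : exists v, V v /\ `|h - v| < d + n.+1%:R^-1.
  have [_ [v Vv <-] lt] := @inf_adherent _ D n.+1%:R^-1 ltac:(by []) (conj hne hlb).
  by exists v.
have [v hv] := choice ex.
have Vm x y : V x -> V y -> V (2^-1 *: (x + y)) by move=> Vx Vy; apply: VZ; apply: VD.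
have cv : cvg (v @ \oo).
  apply: cauchy_cvg; apply: cauchy_exP => e e0.
  set k := e ^+ 2 / (4 * (2 * d + 1)).
  have k0 : 0 < k.
    by apply: divr_gt0; [exact: exprn_gt0|lra].
  set N := Num.truncn k^-1.
  have hN : N.+1%:R^-1 < k.
    rewrite -ltf_pV2 ?posrE //.
    by rewrite invrK truncnS_gt.
  exists (v N); exists N => // n /= Nn.
  rewrite -ball_normE /ball_ /=.
  have dn : n.+1%:R^-1 <= N.+1%:R^-1 :> R by rewrite lef_pV2 ?posrE // ler_nat.
  have d1 : N.+1%:R^-1 <= 1 :> R by rewrite invf_le1 // ler1n.
  have dpos : 0 < N.+1%:R^-1 :> R by [].
  have e1 := @midpoint _ _ _ hip (v N) (v n) h.
  have [VN aN] := hv N.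
  have [Vn an] := hv n.
  have c1 := dle _ (Vm _ _ VN Vn).
  have a1 := dle _ VN.
  have b1 := dle _ Vn.
  set s := `|v N - v n| in e1 *.
  set a := `|h - v N| in e1 aN a1.
  set b := `|h - v n| in e1 an b1.
  set c := `|h - _| in e1 c1.
  set t := N.+1%:R^-1 in hN dn d1 dpos aN.
  set u := n.+1%:R^-1 in dn an.
  have s0 : 0 <= s by exact: normr_ge0.
  have ha : a ^+ 2 <= (d + t) ^+ 2.
    by rewrite ler_pXn2r ?nnegrE //; lra.
  have hb : b ^+ 2 <= (d + t) ^+ 2 by rewrite ler_pXn2r ?nnegrE //; lra.
  have hc : d ^+ 2 <= c ^+ 2 by rewrite ler_pXn2r ?nnegrE //; lra.
  have hk : k * (4 * (2 * d + 1)) = e ^+ 2 by rewrite /k mulrVK // unitfE; lra.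
  have : s ^+ 2 < e ^+ 2 by nra.
  by rewrite ltr_pXn2r ?nnegrE //; lra.
exists (lim (v @ \oo)); split.
  have Hn : \forall n \near \oo, V (v n) by apply: nearW => n; case: (hv n).
  exact: (closed_cvg V Vcl Hn _ cv).
move=> w Vw; apply: le_trans (dle _ Vw).
apply/ler_addgt0Pr => e e0.
set l := lim (v @ \oo).
near \oo => n.
have [_ an] := hv n.
have : `|l - v n| < e / 2.
  by near: n; apply: (cvgrPdist_lt _ _).1 => //; lra.
have : n.+1%:R^-1 < e / 2.
  by near: n; apply: (@near_infty_natSinv_lt _ (PosNum (divr_gt0 e0 (ltr0n _ 2)))).
have := ler_distD (v n) h l.
rewrite (distrC l (v n)) => t1 t2 t3.
move: an t2; set u := n.+1%:R^-1 => an t2. lra.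
Unshelve. all: by end_near.
Qed.
End E.

Lemma closest_unique (R : realType) (H : normedModType R) (ip : H -> H -> R)
  (hip : inner_product_for ip) (V : set H) h p q :
  closed_subspace V -> is_closest V h p -> is_closest V h q -> p = q.
Proof.
case=> V0 VD VZ _ [Vp hp] [Vq hq].
have Vm : V (2^-1 *: (p + q)) by apply: VZ; apply: VD.
have e1 := @midpoint _ _ _ hip p q h.
have c1 := hp _ Vm.
have a1 := hp _ Vq.
have b1 := hq _ Vp.
set s := `|p - q| in e1.
set a := `|h - p| in e1 c1 a1 b1.
set b := `|h - q| in e1 a1 b1.
set c := `|h - _| in e1 c1.
have a0 : 0 <= a by exact: normr_ge0.
have hc : a ^+ 2 <= c ^+ 2 by rewrite ler_pXn2r ?nnegrE //; lra.
have ab : b = a by apply/eqP; rewrite eq_le; apply/andP; split.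
rewrite ab in e1.
have : s ^+ 2 <= 0 by lra.
have s0 : 0 <= s by exact: normr_ge0.
move=> hs; apply/eqP; rewrite -subr_eq0 -normr_eq0 -/s eq_le s0 andbT; nra.
Qed.

Lemma Astar_sub (R : realType) (H : normedModType R) (L A : set (set H)) :
  (forall V, L V -> closed_subspace V) -> A `<=` L -> closed_subspace (Astar A).
Proof.
move=> hL hA; split.
- by move=> a /hA /hL [].
- by move=> x y hx hy a Aa; have [_ D _ _] := hL _ (hA _ Aa); apply: D; [apply: hx|apply: hy].
- by move=> c x hx a Aa; have [_ _ Z _] := hL _ (hA _ Aa); apply: Z; apply: hx.
- by apply: closed_bigI => a /hA /hL [].
Qed.

Theorem lemma20 (R : realType) (H : completeNormedModType R)
  (ip : H -> H -> R) (hip : inner_product_for ip)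
  (h : H) (L : set (set H)) (hL : L !=set0)
  (hLcl : forall V, L V -> closed_subspace V)
  (C : set (set H) -> set (set H))
  (hC : forall A b, C A b <-> (L b /\ b (orth_proj (Astar A) h)))
  (A B : set (set H)) (hA : A `<=` L) (hB : B `<=` L) (hBA : B `<=` C A) :
  orth_proj (Astar A) h = orth_proj (Astar A `&` Astar B) h /\
  dist h (Astar B) <= dist h (Astar A).
Proof.
have sA := @Astar_sub R H L A hLcl hA.
have sB := @Astar_sub R H L B hLcl hB.
have [Vp hVp] := @proj_exists _ _ ip hip _ h sA.
have cA : is_closest (Astar A) h (orth_proj (Astar A) h) by apply: xgetPex; exists Vp.
set p := orth_proj (Astar A) h in cA *.
have Bp : Astar B p by move=> b Bb; have [] := (hC A b).1 (hBA _ Bb).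
have sAB : closed_subspace (Astar A `&` Astar B).
  case: sA => [a0 aD aZ acl]; case: sB => [b0 bD bZ bcl]; split.
  - by [].
  - by move=> x y [? ?] [? ?]; split; [apply: aD|apply: bD].
  - by move=> c x [? ?]; split; [apply: aZ|apply: bZ].
  - exact: closedI.
have cAB : is_closest (Astar A `&` Astar B) h p.
  by case: cA => Ap hp; split => // v [Av _]; apply: hp.
split.
  apply/esym/xget_unique => // q hq.
  exact: (@closest_unique _ _ _ hip _ _ _ _ sAB hq cAB).
apply: (@le_trans _ _ `|h - p|).
  apply: ge_inf; last by exists p.
  by exists 0 => _ [v _ <-].
apply: lb_le_inf; first by exists `|h - p|; exists p => //; case: cA.
by move=> _ [v Av <-]; case: cA => _; apply.
Qed.
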